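(* Let $G$ be a $2K_2$-free graph, let $a,b$ be adjacent vertices of $G$, and let $X$ be a minimal dominating set of $G$ with $a,b\in X$ and $|X|>\alpha(G)$. Let $A$ be the set of vertices not in $\{a,b\}$ adjacent to neither $a$ nor $b$, let $N$ be the set of vertices not in $\{a,b\}$ adjacent to at least one of $a,b$, let $Y=X\cap N$, and let $Z$ be the set of vertices of $A$ having at least one neighbour in $Y$. Then $|Y|=|Z|$ and every vertex of $Z$ is a private neighbour (with respect to $X$) of some vertex of $Y$.
   Context: All graphs are finite, simple and undirected. $2K_2$-free means no induced subgraph isomorphic to the disjoint union of two edges. $\alpha(G)$ is the maximum size of an independent set of $G$. A dominating set is a vertex set $D$ such that every vertex outside $D$ has a neighbour in $D$; it is minimal if no proper subset is dominating. Given a dominating set $D$ and $x\in D$, a vertex $y\notin D$ is a private neighbour of $x$ if $x$ is the only neighbour of $y$ in $D$. *)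

(* Defs.v *)
From mathcomp Require Import all_boot.
Set Implicit Arguments. Unset Strict Implicit. Unset Printing Implicit Defensive.

Section Graph.
Variable T : finType.
Variable e : rel T.

Definition simple_graph : Prop := symmetric e /\ irreflexive e.

Definition twoK2_free : Prop :=
  forall u v w x : T, e u v -> e w x ->
    ~~ e u w -> ~~ e u x -> ~~ e v w -> ~~ e v x ->
    u = w \/ u = x \/ v = w \/ v = x.

Definition independent (S : {set T}) : bool :=
  [forall x in S, forall y in S, ~~ e x y].

Definition alpha : nat := \max_(S : {set T} | independent S) #|S|.

Definition dominating (D : {set T}) : bool :=
  [forall y, (y \in D) || [exists x in D, e x y]].

Definition minimal_dominating (D : {set T}) : bool :=
  dominating D && [forall D' : {set T}, (D' \proper D) ==> ~~ dominating D'].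

Definition private_nb (D : {set T}) (x y : T) : bool :=
  (y \notin D) && e x y && [forall z in D, e z y ==> (z == x)].

End Graph.

(* Main.v *)
Require Import Defs.
From mathcomp Require Import all_boot.
From mathcomp Require Import zify.
Set Implicit Arguments. Unset Strict Implicit. Unset Printing Implicit Defensive.

Section H.
Variable T : finType.
Variable e : rel T.

Lemma priv_exists (X : {set T}) x :
  minimal_dominating e X -> x \in X -> (exists2 w, w \in X & (w != x) && e w x) ->
  exists v, private_nb e X x v.
Proof.
case/andP=> dX /forallP mX xX [w wX /andP[wx ewx]].
have := mX (X :\ x); rewrite properD1 // => /negP nd.
have : ~~ [forall y, (y \in X :\ x) || [exists z in X :\ x, e z y]].
  by apply/negP.
rewrite negb_forall => /existsP[v]; rewrite negb_or => /andP[vn /existsPn ne].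
have vx : v != x.
  apply/eqP=> vx; subst v; move: (ne w); rewrite !inE wx wX ewx //.
have vX : v \notin X by move: vn; rewrite !inE vx.
exists v; rewrite /private_nb vX /=.
move/forallP: dX => /(_ v); rewrite (negbTE vX) /= => /existsP[z /andP[zX ezv]].
have zx : z == x.
  apply/negPn/negP=> zx; move: (ne z); rewrite !inE zx zX ezv.
  by [].
rewrite -(eqP zx) ezv /=; apply/forallP=> u; apply/implyP=> uX; apply/implyP=> euv.
rewrite (eqP zx); apply/negPn/negP=> ux; move: (ne u); rewrite !inE ux uX euv.
by [].
Qed.

Lemma priv_uniq (X : {set T}) y y' v :
  private_nb e X y v -> private_nb e X y' v -> y' \in X -> y' = y.
Proof.
case/andP=> _ /forallP H /andP[/andP[_ e'] _] y'X.
by move: (H y'); rewrite y'X e' => /eqP.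
Qed.
End H.

Theorem claim3 (T : finType) (e : rel T) (a b : T) (X : {set T}) :
  simple_graph e -> twoK2_free e -> e a b ->
  minimal_dominating e X -> a \in X -> b \in X -> alpha e < #|X| ->
  let A := [set v | (v != a) && (v != b) && ~~ e a v && ~~ e b v] in
  let N := [set v | (v != a) && (v != b) && (e a v || e b v)] in
  let Y := X :&: N in
  let Z := [set z in A | [exists y in Y, e y z]] in
  #|Y| = #|Z| /\ (forall z, z \in Z -> exists2 y, y \in Y & private_nb e X y z).
Proof.
move=> [sym irr] k2 eab md aX bX lt A N Y Z.
pose f y := odflt y [pick v | private_nb e X y v].
have fP : forall y, y \in Y -> private_nb e X y (f y).
  move=> y; rewrite /Y /N !inE => /andP[yX /andP[/andP[ya yb] ey]].
  have [v pv] : exists v, private_nb e X y v.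
    apply: priv_exists => //.
    case/orP: ey => ey; [exists a | exists b] => //; rewrite ey andbT eq_sym //.
  rewrite /f; case: pickP => [u //|/(_ v)]; by rewrite pv.
have fA : forall y, y \in Y -> f y \in A :\: X.
  move=> y yY; have := fP y yY; case/andP=> /andP[fX eyf] /forallP H.
  have ya : y != a by move: yY; rewrite !inE => /and3P[_ /andP[]].
  have yb : y != b by move: yY; rewrite !inE => /and3P[_ /andP[]].
  rewrite /A !inE fX /= -!andbA; apply/and4P; split.
  - by apply: contraNneq fX => ->.
  - by apply: contraNneq fX => ->.
  - by apply/negP=> ea; move: (H a); rewrite aX ea /= eq_sym (negbTE ya).
  - by apply/negP=> eb; move: (H b); rewrite bX eb /= eq_sym (negbTE yb).
have finj : {in Y &, injective f}.
  move=> y y' yY y'Y fe; apply: (priv_uniq (fP y' y'Y)).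
    by rewrite -fe; apply: fP.
  by move: yY; rewrite inE => /andP[].
have aA : a \notin A by rewrite /A inE eqxx.
have indep : independent e (a |: A).
  apply/forallP=> x; apply/implyP=> xI; apply/forallP=> y; apply/implyP=> yI.
  move: xI yI; rewrite /A !inE -!andbA => /orP[/eqP->|/and4P[xa xb eax ebx]] /orP[/eqP->|/and4P[ya yb eay eby]].
  - by rewrite irr.
  - by [].
  - by rewrite sym.
  - apply/negP=> exy.
    have := k2 x y a b exy eab; rewrite !(sym x) !(sym y) eax ebx eay eby.
    by case=> // [|[|[]]] /eqP; rewrite ?(negbTE xa) ?(negbTE xb) ?(negbTE ya) ?(negbTE yb).
have alA : #|a |: A| <= alpha e by rewrite /alpha; apply: (leq_bigmax_cond (F := fun S : {set T} => #|S|)) indep.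
rewrite cardsU1 aA in alA.
have Xsub : X \subset ([set a; b] :|: Y) :|: (X :&: A).
  apply/subsetP=> x xX; rewrite /Y /N /A !inE xX /=.
  case: (x =P a) => //= /eqP xa; case: (x =P b) => //= /eqP xb.
  by case: (e a x); case: (e b x).
have cX : #|X| <= 2 + #|Y| + #|X :&: A|.
  apply: (leq_trans (subset_leq_card Xsub)).
  apply: (leq_trans (leq_card_setU _ _)); rewrite leq_add2r.
  apply: (leq_trans (leq_card_setU _ _)); rewrite leq_add2r.
  by rewrite cards2; case: (a != b).
have cAX : #|A :\: X| <= #|Y|.
  have := cardsID X A; rewrite setIC => cA.
  move: (leq_ltn_trans alA lt) => h; move: (leq_trans h cX); rewrite -cA.
  rewrite !addSn !add0n ltnS ltnS addnC leq_add2r; lia.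
have fYe : f @: Y = A :\: X.
  apply/eqP; rewrite eqEcard card_in_imset // cAX andbT.
  by apply/subsetP=> _ /imsetP[y yY ->]; apply: fA.
have ZfY : Z = f @: Y.
  apply/eqP; rewrite eqEsubset; apply/andP; split; last first.
    apply/subsetP=> _ /imsetP[y yY ->].
    rewrite /Z inE; have := fA y yY; rewrite inE => /andP[_ ->] /=.
    by apply/existsP; exists y; rewrite yY; case/andP: (fP y yY) => /andP[].
  apply/subsetP=> z; rewrite /Z inE => /andP[zA /existsP[y /andP[yY eyz]]].
  rewrite fYe inE zA andbT; apply/negP=> zX.
  have zy : y != z by apply: contraTneq zA => <-; rewrite /A inE; move: yY; rewrite /Y /N !inE => /and3P[_ _]; case/orP=> ->; rewrite ?andbF ?andbT.
  have [q pq] : exists q, private_nb e X z q.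
    by apply: priv_exists => //; exists y => //; [move: yY; rewrite inE => /andP[] | rewrite zy].
  have qA : q \in f @: Y.
    rewrite fYe; case/andP: pq => /andP[qX ezq] /forallP H.
    have za : z != a by move: zA; rewrite /A inE -!andbA => /and4P[].
    have zb : z != b by move: zA; rewrite /A inE -!andbA => /and4P[].
    rewrite /A !inE qX /= -!andbA; apply/and4P; split.
    - by apply: contraNneq qX => ->.
    - by apply: contraNneq qX => ->.
    - by apply/negP=> ea; move: (H a); rewrite aX ea /= eq_sym (negbTE za).
    - by apply/negP=> eb; move: (H b); rewrite bX eb /= eq_sym (negbTE zb).
  case/imsetP: qA => y' y'Y qe; subst q.
  have := priv_uniq (fP y' y'Y) pq zX => zy'; subst z.
  move: zA y'Y; rewrite /A /Y /N !inE -!andbA => /and4P[_ _ /negbTE -> /negbTE ->].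
  by rewrite !andbF.
split.
  by rewrite ZfY card_in_imset.
move=> z; rewrite ZfY => /imsetP[y yY ->]; exists y => //; exact: fP.
Qed.
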